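(* Consider the linear time-invariant descriptor system $$E x_{k+1}=A x_k+B u_k+w_k,\qquad y_{k}=H x_{k}+v_{k-1},$$ with $x_k\in\mathbb{R}^n$, $y_k\in\mathbb{R}^m$, $u_k\in\mathbb{R}^q$, $E,A\in\mathbb{R}^{n_1\times n}$, $B\in\mathbb{R}^{n_1\times q}$, $H\in\mathbb{R}^{m\times n}$. Assume $\begin{bmatrix}E & A\end{bmatrix}$ has full row rank, $\begin{bmatrix}E^T & H^T\end{bmatrix}^T$ has full column rank, and that $P_0,Q,R$ are symmetric positive definite. Let $\bar x_0\in\mathbb{R}^n$, let inputs $u_0,u_1,\dots$ and measurements $y_1,y_2,\dots$ be given, and let $T\ge 2$. Define the unconstrained objective $$J_T(x_1,\dots,x_T)=\|Ex_1-A\bar x_0-Bu_0\|^2_{P_0^{(-)}}+\sum_{k=1}^{T-1}\|Ex_{k+1}-Ax_k-Bu_k\|_Q^2+\sum_{k=1}^{T-1}\|y_k-Hx_k\|_R^2,$$ where $P_0^{(-)}=AP_0A^T+Q$. Define recursively, starting from $\hat x_0^{(+)}=\bar x_0$, $P_0^{(+)}=P_0$, for $k=1,\dots,T-1$: $$P_k^{(+)}=\big(E^T(P_{k-1}^{(-)})^{-1}E+H^TR^{-1}H\big)^{-1},\qquad P_k^{(-)}=AP_k^{(+)}A^T+Q,$$ $$\hat x_k^{(+)}=P_k^{(+)}H^TR^{-1}y_k+P_k^{(+)}E^T(P_{k-1}^{(-)})^{-1}\big(A\hat x_{k-1}^{(+)}+Bu_{k-1}\big).$$ Then for every $x_T\in\mathbb{R}^n$,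 $$\min_{x_1,\dots,x_{T-1}} J_T(x_1,\dots,x_T)=\|Ex_T-z_T\|^2_{P_{T-1}^{(-)}}+\widehat J_{T-1},$$ where $z_T:=A\hat x_{T-1}^{(+)}+Bu_{T-1}$ and $\widehat J_{T-1}$ is a constant independent of $x_T$, namely the minimum over $x_1,\dots,x_{T-1}$ of $\|Ex_1-A\bar x_0-Bu_0\|^2_{P_0^{(-)}}+\sum_{k=1}^{T-2}\|Ex_{k+1}-Ax_k-Bu_k\|_Q^2+\sum_{k=1}^{T-1}\|y_k-Hx_k\|_R^2$.
   Context: For a symmetric positive definite matrix $S$ and a vector $z$, the notation $\|z\|_S^2$ means $z^TS^{-1}z$. All matrices $P_k^{(+)}$, $P_k^{(-)}$ defined by the recursion are symmetric positive definite under the stated assumptions, so all inverses exist. The left-hand side is the arrival cost of the unconstrained full information estimation problem (no inequality constraints on states or noises). *)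

(* Defs.v *)
From HB Require Import structures.
From mathcomp Require Import all_boot all_order all_algebra.
Set Implicit Arguments. Unset Strict Implicit. Unset Printing Implicit Defensive.
Import Order.TTheory GRing.Theory Num.Theory.
Local Open Scope ring_scope.

Section Defs.
Variable R : realFieldType.

Definition wnorm2 (p : nat) (S : 'M[R]_p) (z : 'cV[R]_p) : R :=
  (z^T *m invmx S *m z) 0 0.

Definition spd (p : nat) (S : 'M[R]_p) : Prop :=
  S^T = S /\ forall z : 'cV[R]_p, z != 0 -> 0 < (z^T *m S *m z) 0 0.

Definition is_min_of (X : Type) (P : X -> Prop) (f : X -> R) (v : R) : Prop :=
  (exists x, P x /\ f x = v) /\ (forall x, P x -> v <= f x).

Variables (n n1 m q : nat).
Variables (E A : 'M[R]_(n1, n)) (B : 'M[R]_(n1, q)) (H : 'M[R]_(m, n)).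
Variables (P0 : 'M[R]_n) (Q : 'M[R]_n1) (Rm : 'M[R]_m).
Variables (xbar0 : 'cV[R]_n) (u : nat -> 'cV[R]_q) (y : nat -> 'cV[R]_m).

Fixpoint kf_state (k : nat) : 'M[R]_n * 'cV[R]_n :=
  match k with
  | 0 => (P0, xbar0)
  | k'.+1 =>
      let Pp := (kf_state k').1 in
      let xh := (kf_state k').2 in
      let Pm := A *m Pp *m A^T + Q in
      let Pn := invmx (E^T *m invmx Pm *m E + H^T *m invmx Rm *m H) in
      (Pn, Pn *m H^T *m invmx Rm *m y k'.+1
           + Pn *m E^T *m invmx Pm *m (A *m xh + B *m u k'))
  end.

Definition Pplus (k : nat) : 'M[R]_n := (kf_state k).1.
Definition xhat (k : nat) : 'cV[R]_n := (kf_state k).2.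
Definition Pminus (k : nat) : 'M[R]_n1 := A *m Pplus k *m A^T + Q.

(* J_T(x_1,...,x_T); only x 1, ..., x T are used *)
Definition J_T (T : nat) (x : nat -> 'cV[R]_n) : R :=
  wnorm2 (Pminus 0) (E *m x 1%N - A *m xbar0 - B *m u 0%N)
  + \sum_(1 <= k < T) wnorm2 Q (E *m x k.+1 - A *m x k - B *m u k)
  + \sum_(1 <= k < T) wnorm2 Rm (y k - H *m x k).

(* the objective defining Jhat_{T-1}; only x 1, ..., x (T-1) are used *)
Definition Jhat_obj (T : nat) (x : nat -> 'cV[R]_n) : R :=
  wnorm2 (Pminus 0) (E *m x 1%N - A *m xbar0 - B *m u 0%N)
  + \sum_(1 <= k < T.-1) wnorm2 Q (E *m x k.+1 - A *m x k - B *m u k)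
  + \sum_(1 <= k < T) wnorm2 Rm (y k - H *m x k).

End Defs.

(* Main.v *)
Require Import Defs.
From HB Require Import structures.
From mathcomp Require Import all_boot all_order all_algebra.

Set Implicit Arguments. Unset Strict Implicit. Unset Printing Implicit Defensive.
Import Order.TTheory GRing.Theory Num.Theory.
Local Open Scope ring_scope.
From mathcomp Require Import lra.

Section Gen.
Variable R : realFieldType.

Definition qf p (W : 'M[R]_p) (a b : 'cV[R]_p) : R := (a^T *m W *m b) 0 0.

Lemma entry_tr (M : 'M[R]_1) : M 0 0 = M^T 0 0.
Proof. by rewrite mxE. Qed.

Lemma entryD (M N : 'M[R]_1) : (M + N) 0 0 = M 0 0 + N 0 0.
Proof. by rewrite mxE. Qed.

Lemma entryN (M : 'M[R]_1) : (- M) 0 0 = - M 0 0.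
Proof. by rewrite mxE. Qed.

Lemma qf_sym p (W : 'M[R]_p) a b : W^T = W -> qf W a b = qf W b a.
Proof. by move=> hW; rewrite /qf entry_tr !trmx_mul trmxK hW mulmxA. Qed.

Lemma qfDl p (W : 'M[R]_p) a b c : qf W (a + b) c = qf W a c + qf W b c.
Proof. by rewrite /qf linearD /= !mulmxDl entryD. Qed.

Lemma qfDr p (W : 'M[R]_p) a b c : qf W c (a + b) = qf W c a + qf W c b.
Proof. by rewrite /qf !mulmxDr entryD. Qed.

Lemma qfNl p (W : 'M[R]_p) a c : qf W (- a) c = - qf W a c.
Proof. by rewrite /qf linearN /= !mulNmx entryN. Qed.

Lemma qfNr p (W : 'M[R]_p) a c : qf W c (- a) = - qf W c a.
Proof. by rewrite /qf !mulmxN entryN. Qed.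

Lemma qf0 p (W : 'M[R]_p) a : qf W a 0 = 0.
Proof. by rewrite /qf mulmx0 mxE. Qed.

Lemma qfMl p k (W : 'M[R]_p) (M : 'M[R]_(p,k)) d e :
  qf W (M *m d) e = (d^T *m (M^T *m W *m e)) 0 0.
Proof. by rewrite /qf trmx_mul !mulmxA. Qed.

Lemma qf_expand p (W : 'M[R]_p) e f : W^T = W ->
  qf W (e + f) (e + f) = qf W e e + 2 * qf W f e + qf W f f.
Proof.
move=> hW; rewrite qfDl !qfDr (qf_sym e f hW); lra.
Qed.


Lemma qfWD p (W1 W2 : 'M[R]_p) a b : qf (W1 + W2) a b = qf W1 a b + qf W2 a b.
Proof. by rewrite /qf mulmxDr mulmxDl entryD. Qed.

Lemma qf_congr p k (W : 'M[R]_k) (M : 'M[R]_(k,p)) a b :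
  qf (M^T *m W *m M) a b = qf W (M *m a) (M *m b).
Proof. by rewrite /qf trmx_mul !mulmxA. Qed.

Lemma qf_inv p (S : 'M[R]_p) a b : S^T = S -> S \in unitmx ->
  qf (invmx S) (S *m a) (S *m b) = qf S a b.
Proof.
move=> hS hU; rewrite /qf trmx_mul hS.
by rewrite -!mulmxA (mulmxA (invmx S)) mulVmx // mul1mx.
Qed.

Definition pd p (S : 'M[R]_p) := S^T = S /\ forall z, z != 0 -> 0 < qf S z z.

Lemma spd_unit p (S : 'M[R]_p) : pd S -> S \in unitmx.
Proof.
move=> [hS hP]; rewrite -row_free_unit; apply: inj_row_free => v hv.
apply/eqP; apply: contraT => hnz.
have : v^T != 0 by rewrite trmx_eq0.
move/hP; rewrite /qf trmxK hv mul0mx mxE; by rewrite ltxx.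
Qed.

Lemma qf_ge0 p (S : 'M[R]_p) v : pd S -> 0 <= qf S v v.
Proof.
move=> [_ hP]; have [->|hv] := eqVneq v 0; first by rewrite qf0.
exact: ltW (hP _ hv).
Qed.

Lemma spd_inv p (S : 'M[R]_p) : pd S -> pd (invmx S).
Proof.
move=> hS; have hU := spd_unit hS; case: hS => hs hP; split.
  by rewrite trmx_inv hs.
move=> z hz; set w := invmx S *m z.
have hz' : z = S *m w by rewrite /w mulmxA mulmxV // mul1mx.
rewrite hz' qf_inv //; apply: hP; apply: contraNneq hz => hw0.
by rewrite hz' hw0 mulmx0.
Qed.

Lemma pd_Pm p k (P : 'M[R]_p) (Q : 'M[R]_k) (A : 'M[R]_(k,p)) :
  pd P -> pd Q -> pd (A *m P *m A^T + Q).
Proof.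
move=> hP [hQs hQ]; split.
  by rewrite linearD /= !trmx_mul trmxK hP.1 hQs mulmxA.
move=> z hz; rewrite qfWD.
have -> : qf (A *m P *m A^T) z z = qf P (A^T *m z) (A^T *m z).
  by rewrite -qf_congr trmxK.
have := qf_ge0 (A^T *m z) hP; have := hQ z hz; lra.
Qed.


Lemma expand2 p a b (M1 : 'M[R]_(a,p)) W1 c1 (M2 : 'M[R]_(b,p)) W2 c2 x0 d :
  W1^T = W1 -> W2^T = W2 ->
  M1^T *m W1 *m (M1 *m x0 - c1) + M2^T *m W2 *m (M2 *m x0 - c2) = 0 ->
  qf W1 (M1 *m (x0 + d) - c1) (M1 *m (x0 + d) - c1)
  + qf W2 (M2 *m (x0 + d) - c2) (M2 *m (x0 + d) - c2)
  = qf W1 (M1 *m x0 - c1) (M1 *m x0 - c1) + qf W2 (M2 *m x0 - c2) (M2 *m x0 - c2)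
    + qf W1 (M1 *m d) (M1 *m d) + qf W2 (M2 *m d) (M2 *m d).
Proof.
move=> h1 h2 hg.
have e k (M : 'M[R]_(k,p)) c : M *m (x0 + d) - c = (M *m x0 - c) + M *m d.
  by rewrite mulmxDr addrAC.
rewrite !e !qf_expand // !qfMl.
have : (d^T *m (M1^T *m W1 *m (M1 *m x0 - c1))) 0 0
     + (d^T *m (M2^T *m W2 *m (M2 *m x0 - c2))) 0 0 = 0.
  by rewrite -entryD -mulmxDr hg mulmx0 mxE.
lra.
Qed.

Lemma qfNN p (W : 'M[R]_p) a : qf W (- a) (- a) = qf W a a.
Proof. by rewrite qfNl qfNr opprK. Qed.

Lemma marg p k (P : 'M[R]_p) (Q : 'M[R]_k) (A : 'M[R]_(k,p)) xh r :
  pd P -> pd Q ->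
  (forall v, qf (invmx (A *m P *m A^T + Q)) (r - A *m xh) (r - A *m xh)
     <= qf (invmx P) (v - xh) (v - xh) + qf (invmx Q) (r - A *m v) (r - A *m v)) /\
  exists v, qf (invmx (A *m P *m A^T + Q)) (r - A *m xh) (r - A *m xh)
     = qf (invmx P) (v - xh) (v - xh) + qf (invmx Q) (r - A *m v) (r - A *m v).
Proof.
move=> hP hQ.
set G := A *m P *m A^T + Q.
have hG : pd G by exact: pd_Pm.
have uG := spd_unit hG; have uP := spd_unit hP; have uQ := spd_unit hQ.
pose u := invmx G *m (r - A *m xh).
have hu : G *m u = r - A *m xh by rewrite /u mulmxA mulmxV // mul1mx.
clearbody u.
have hr : r = A *m xh + (A *m P *m A^T) *m u + Q *m u.
  by rewrite -addrA -mulmxDl -/G hu addrC subrK.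
pose vs := xh + P *m A^T *m u.
have e1 : 1%:M *m vs - xh = P *m (A^T *m u).
  by rewrite mul1mx /vs (addrC xh) addrK mulmxA.
have e2 : A *m vs - r = - (Q *m u).
  rewrite /vs hr mulmxDr !mulmxA opprD addrA.
  by rewrite subrr add0r.
have f v : qf (invmx P) (v - xh) (v - xh) + qf (invmx Q) (r - A *m v) (r - A *m v)
   = qf (invmx P) (1%:M *m v - xh) (1%:M *m v - xh)
     + qf (invmx Q) (A *m v - r) (A *m v - r).
  by rewrite mul1mx -(qfNN _ (A *m v - r)) opprB.
have val : qf (invmx P) (1%:M *m vs - xh) (1%:M *m vs - xh)
     + qf (invmx Q) (A *m vs - r) (A *m vs - r)
   = qf (invmx G) (r - A *m xh) (r - A *m xh).
  rewrite e1 e2 qfNN !qf_inv ?hP.1 ?hQ.1 // -hu qf_inv ?hG.1 //.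
  by rewrite /G qfWD -qf_congr trmxK.
have grad : (1%:M)^T *m invmx P *m (1%:M *m vs - xh)
     + A^T *m invmx Q *m (A *m vs - r) = 0.
  rewrite e1 e2 trmx1 mul1mx (mulmxA (invmx P)) mulVmx // mul1mx.
  by rewrite mulmxN -mulmxA (mulmxA (invmx Q)) mulVmx // mul1mx subrr.
have s1 : (invmx P)^T = invmx P by rewrite trmx_inv hP.1.
have s2 : (invmx Q)^T = invmx Q by rewrite trmx_inv hQ.1.
clearbody vs.
split; last by exists vs; rewrite f val.
move=> v; rewrite f -val.
have -> : v = vs + (v - vs) by rewrite addrC subrK.
rewrite (expand2 (x0:=vs) (v - vs) s1 s2 grad).
have := qf_ge0 (1%:M *m (v - vs)) (spd_inv hP).
have := qf_ge0 (A *m (v - vs)) (spd_inv hQ).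
lra.
Qed.


Lemma kstep p a b (M1 : 'M[R]_(a,p)) (S1 : 'M[R]_a) c1 (M2 : 'M[R]_(b,p)) (S2 : 'M[R]_b) c2 v :
  pd S1 -> pd S2 ->
  M1^T *m invmx S1 *m M1 + M2^T *m invmx S2 *m M2 \in unitmx ->
  let Pn := invmx (M1^T *m invmx S1 *m M1 + M2^T *m invmx S2 *m M2) in
  let xh := Pn *m M2^T *m invmx S2 *m c2 + Pn *m M1^T *m invmx S1 *m c1 in
  qf (invmx S1) (M1 *m v - c1) (M1 *m v - c1) + qf (invmx S2) (c2 - M2 *m v) (c2 - M2 *m v)
  = qf (invmx Pn) (v - xh) (v - xh)
    + (qf (invmx S1) (M1 *m xh - c1) (M1 *m xh - c1)
       + qf (invmx S2) (c2 - M2 *m xh) (c2 - M2 *m xh)).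
Proof.
move=> h1 h2 hU Pn xh.
set M := M1^T *m invmx S1 *m M1 + M2^T *m invmx S2 *m M2.
have s1 : (invmx S1)^T = invmx S1 by rewrite trmx_inv h1.1.
have s2 : (invmx S2)^T = invmx S2 by rewrite trmx_inv h2.1.
have nn w : qf (invmx S2) (c2 - M2 *m w) (c2 - M2 *m w)
   = qf (invmx S2) (M2 *m w - c2) (M2 *m w - c2).
  by rewrite -qfNN opprB.
have grad : M1^T *m invmx S1 *m (M1 *m xh - c1) + M2^T *m invmx S2 *m (M2 *m xh - c2) = 0.
  have hx : M *m xh = M2^T *m invmx S2 *m c2 + M1^T *m invmx S1 *m c1.
    by rewrite /xh /Pn -/M !mulmxDr !mulmxA mulmxV // !mul1mx.
  rewrite !mulmxBr !mulmxA addrACA -mulmxDl -/M hx -opprD [X in - X]addrC subrr.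
  done.
clearbody xh.
rewrite !nn.
have -> : v = xh + (v - xh) by rewrite addrC subrK.
rewrite (expand2 (x0:=xh) (v - xh) s1 s2 grad).
rewrite /Pn invmxK -/M /M qfWD !qf_congr (addrC xh) addrK.
set X1 := qf _ (M1 *m xh - c1) _; set X2 := qf _ (M2 *m xh - c2) _.
set Y1 := qf _ (M1 *m (v - xh)) _; set Y2 := qf _ (M2 *m (v - xh)) _.
lra.
Qed. End Gen.

Section Main.
Variable R : realFieldType.
Variables (n n1 m q : nat).
Variables (E A : 'M[R]_(n1, n)) (B : 'M[R]_(n1, q)) (H : 'M[R]_(m, n)).
Variables (P0 : 'M[R]_n) (Q : 'M[R]_n1) (Rm : 'M[R]_m).
Variables (xbar0 : 'cV[R]_n) (u : nat -> 'cV[R]_q) (y : nat -> 'cV[R]_m).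
Hypothesis hrk : \rank (col_mx E H) = n.
Hypothesis hP0 : spd P0.
Hypothesis hQ : spd Q.
Hypothesis hR : spd Rm.

Definition Pp k := Pplus E A B H P0 Q Rm xbar0 u y k.
Definition Pmn k := Pminus E A B H P0 Q Rm xbar0 u y k.
Definition xh k := xhat E A B H P0 Q Rm xbar0 u y k.
Definition Mk (S : 'M[R]_n1) := E^T *m invmx S *m E + H^T *m invmx Rm *m H.

Lemma Pp_S k : Pp k.+1 = invmx (Mk (Pmn k)).
Proof. by []. Qed.

Lemma Mk_pd (S : 'M[R]_n1) : pd S -> pd (Mk S).
Proof.
move=> hS; have hR' : pd Rm := hR.
have s1 := spd_inv hS; have s2 := spd_inv hR'.
split.
  by rewrite /Mk linearD /= !trmx_mul !trmxK s1.1 s2.1 !mulmxA.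
move=> z hz; rewrite /Mk qfWD !qf_congr.
have g1 := qf_ge0 (E *m z) s1; have g2 := qf_ge0 (H *m z) s2.
have [hE|hE] := eqVneq (E *m z) 0; last first.
  have := s1.2 _ hE; lra.
have [hH|hH] := eqVneq (H *m z) 0; last first.
  have := s2.2 _ hH; lra.
exfalso; move/negP: hz; apply.
have hc : col_mx E H *m z = 0 by rewrite mul_col_mx hE hH col_mx0.
have rf : row_free (col_mx E H)^T by rewrite /row_free mxrank_tr hrk.
have : z^T *m (col_mx E H)^T = 0 *m (col_mx E H)^T by rewrite -trmx_mul hc trmx0 mul0mx.
by move/(row_free_inj rf) => /eqP; rewrite trmx_eq0.
Qed.

Lemma Pp_pd k : pd (Pp k).
Proof.
elim: k => [|k ih]; first exact: hP0.
rewrite Pp_S; apply: spd_inv; apply: Mk_pd.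
exact: (pd_Pm _ ih hQ).
Qed.

Lemma Pmn_pd k : pd (Pmn k).
Proof. exact: (pd_Pm _ (Pp_pd k) hQ). Qed.


Definition F k (x : nat -> 'cV[R]_n) : R :=
  wnorm2 (Pmn 0) (E *m x 1%N - A *m xbar0 - B *m u 0%N)
  + \sum_(1 <= i < k) wnorm2 Q (E *m x i.+1 - A *m x i - B *m u i)
  + \sum_(1 <= i < k) wnorm2 Rm (y i - H *m x i).

Definition Gk k x := F k x + wnorm2 Rm (y k - H *m x k).

Definition zz j := A *m xh j + B *m u j.

Lemma F_S k x : (1 <= k)%N ->
  F k.+1 x = Gk k x + wnorm2 Q (E *m x k.+1 - A *m x k - B *m u k).
Proof.
move=> hk; rewrite /Gk /F !big_nat_recr //=.
set a := wnorm2 _ _; set b := \sum_(1 <= i < k) _; set c := \sum_(1 <= i < k) _.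
set d := wnorm2 Q _; set e := wnorm2 Rm _; lra.
Qed.

Lemma Gk_local k x x' : (1 <= k)%N -> (forall i, (i <= k)%N -> x' i = x i) ->
  Gk k x' = Gk k x.
Proof.
move=> hk hx; rewrite /Gk /F hx // hx //.
congr (_ + _ + _ + _); apply: eq_big_nat => i /andP [h1 h2].
  by rewrite !hx // ltnW.
by rewrite hx // ltnW.
Qed.

Lemma kstep' j v :
  wnorm2 (Pmn j) (E *m v - zz j) + wnorm2 Rm (y j.+1 - H *m v)
  = wnorm2 (Pp j.+1) (v - xh j.+1)
    + (wnorm2 (Pmn j) (E *m xh j.+1 - zz j) + wnorm2 Rm (y j.+1 - H *m xh j.+1)).
Proof.
have hU : Mk (Pmn j) \in unitmx by apply: spd_unit; apply: Mk_pd; apply: Pmn_pd.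
exact: (kstep (zz j) (y j.+1) v (Pmn_pd j) hR hU).
Qed.

Lemma marg' j (w : 'cV[R]_n1) :
  (forall v', wnorm2 (Pmn j) (w - zz j)
     <= wnorm2 (Pp j) (v' - xh j) + wnorm2 Q (w - A *m v' - B *m u j)) /\
  exists v', wnorm2 (Pmn j) (w - zz j)
     = wnorm2 (Pp j) (v' - xh j) + wnorm2 Q (w - A *m v' - B *m u j).
Proof.
have [h1 h2] := @marg R n n1 (Pp j) Q A (xh j) (w - B *m u j) (Pp_pd j) hQ.
have e1 : w - zz j = w - B *m u j - A *m xh j.
  by rewrite /zz opprD addrA addrAC.
have e2 v' : w - A *m v' - B *m u j = w - B *m u j - A *m v' by rewrite addrAC.
rewrite e1; split.
  by move=> v'; rewrite e2; exact: h1.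
by case: h2 => v' hv; exists v'; rewrite e2.
Qed.


Definition Inv1 j c :=
  (forall x, wnorm2 (Pmn j) (E *m x j.+1 - zz j) + c <= F j.+1 x) /\
  (forall v, exists x, x j.+1 = v /\ F j.+1 x = wnorm2 (Pmn j) (E *m v - zz j) + c).

Definition Inv2 j c :=
  (forall x, wnorm2 (Pp j) (x j - xh j) + c <= Gk j x) /\
  (forall v, exists x, x j = v /\ Gk j x = wnorm2 (Pp j) (v - xh j) + c).

Definition K j :=
  wnorm2 (Pmn j) (E *m xh j.+1 - zz j) + wnorm2 Rm (y j.+1 - H *m xh j.+1).

Lemma inv1_0 : Inv1 0 0.
Proof.
have e v : E *m v - zz 0 = E *m v - A *m xbar0 - B *m u 0 by rewrite /zz opprD addrA.
have eF x : F 1 x = wnorm2 (Pmn 0) (E *m x 1%N - zz 0) + 0.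
  by rewrite /F !big_geq // !addr0 e.
split; first by move=> x; rewrite eF.
by move=> v; exists (fun _ => v); split => //; rewrite eF.
Qed.

Lemma step12 j c : Inv1 j c -> Inv2 j.+1 (c + K j).
Proof.
case=> h1 h2; split.
  move=> x; rewrite /Gk; have := h1 x; have := kstep' j (x j.+1); rewrite /K.
  set a := wnorm2 (Pmn j) _; set b := wnorm2 Rm _; set d := wnorm2 (Pp j.+1) _.
  set e := wnorm2 (Pmn j) (E *m xh j.+1 - zz j); set f := wnorm2 Rm (y j.+1 - H *m xh j.+1).
  lra.
move=> v; case: (h2 v) => x [hx e]; exists x; split => //.
rewrite /Gk e hx; have := kstep' j v; rewrite /K.
set a := wnorm2 (Pmn j) _; set b := wnorm2 Rm _; set d := wnorm2 (Pp j.+1) _.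
set e' := wnorm2 (Pmn j) (E *m xh j.+1 - zz j); set f := wnorm2 Rm (y j.+1 - H *m xh j.+1).
lra.
Qed.

Lemma step21 j c : (1 <= j)%N -> Inv2 j c -> Inv1 j c.
Proof.
move=> hj [h1 h2]; split.
  move=> x; rewrite F_S //; have := h1 x.
  have [m1 _] := marg' j (E *m x j.+1); have := m1 (x j).
  set a := wnorm2 (Pmn j) _; set b := wnorm2 (Pp j) _; set d := wnorm2 Q _.
  lra.
move=> v; have [_ [vs hvs]] := marg' j (E *m v).
case: (h2 vs) => x [hx e].
exists (fun i => if i == j.+1 then v else x i); split; first by rewrite eqxx.
rewrite F_S // (@Gk_local j x); last first.
- by move=> i hi; rewrite ltn_eqF.
- by [].
rewrite /= eqxx (ltn_eqF (ltnSn j)) e hvs hx.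
set a := wnorm2 (Pp j) _; set d := wnorm2 Q _; lra.
Qed.

Lemma all_inv j : exists c, Inv1 j c.
Proof.
elim: j => [|j [c hc]]; first by exists 0; exact: inv1_0.
by exists (c + K j); apply: step21 => //; exact: step12.
Qed.


Lemma final (T : nat) : (2 <= T)%N ->
  exists Jhat : R,
    is_min_of (fun _ => True)
      (Jhat_obj E A B H P0 Q Rm xbar0 u y T) Jhat /\
    forall xT : 'cV[R]_n,
      is_min_of (fun x : nat -> 'cV[R]_n => x T = xT)
        (J_T E A B H P0 Q Rm xbar0 u y T)
        (wnorm2 (Pminus E A B H P0 Q Rm xbar0 u y T.-1)
           (E *m xT - (A *m xhat E A B H P0 Q Rm xbar0 u y T.-1 + B *m u T.-1))
         + Jhat).
Proof.
case: T => [|[|j]] // _.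
have [c0 hc0] := all_inv j.
have I2 := step12 hc0.
have I1 := step21 (ltn0Sn j) I2.
exists (c0 + K j); split.
  have eJ x : Jhat_obj E A B H P0 Q Rm xbar0 u y j.+2 x = Gk j.+1 x.
    by rewrite /Jhat_obj /Gk /F /= (big_nat_recr j.+1 1 (fun k => wnorm2 Rm (y k - H *m x k))) //= addrA.
  split.
    case: (I2.2 (xh j.+1)) => x [_ e]; exists x; split => //.
    rewrite eJ e subrr /wnorm2 mulmx0 mxE add0r //.
  move=> x _; rewrite eJ; have := I2.1 x.
  have g : 0 <= wnorm2 (Pp j.+1) (x j.+1 - xh j.+1) :=
    qf_ge0 _ (spd_inv (Pp_pd j.+1)).
  set a := wnorm2 _ _ in g *; lra.
move=> xT; split.
  case: (I1.2 xT) => x [hx e]; exists x; split => //; exact: e.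
move=> x hx; have := I1.1 x; rewrite hx; exact.
Qed.

End Main.

Theorem theorem1 (R : realFieldType) (n n1 m q : nat)
  (E A : 'M[R]_(n1, n)) (B : 'M[R]_(n1, q)) (H : 'M[R]_(m, n))
  (P0 : 'M[R]_n) (Q : 'M[R]_n1) (Rm : 'M[R]_m)
  (xbar0 : 'cV[R]_n) (u : nat -> 'cV[R]_q) (y : nat -> 'cV[R]_m) (T : nat) :
  \rank (row_mx E A) = n1 ->
  \rank (col_mx E H) = n ->
  spd P0 -> spd Q -> spd Rm ->
  (2 <= T)%N ->
  exists Jhat : R,
    is_min_of (fun _ => True)
      (Jhat_obj E A B H P0 Q Rm xbar0 u y T) Jhat /\
    forall xT : 'cV[R]_n,
      is_min_of (fun x : nat -> 'cV[R]_n => x T = xT)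
        (J_T E A B H P0 Q Rm xbar0 u y T)
        (wnorm2 (Pminus E A B H P0 Q Rm xbar0 u y T.-1)
           (E *m xT - (A *m xhat E A B H P0 Q Rm xbar0 u y T.-1 + B *m u T.-1))
         + Jhat).
Proof.
move=> _ hrk hP0 hQ hR hT.
exact: (final A B xbar0 u y hrk hP0 hQ hR hT).
Qed.
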